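(* For every integer $n\geq 38$ there exists a neutral graph on $n$ vertices that is not a tree.
   Context: All graphs are finite, simple and connected. For a graph $G=(V,E)$ with $m=|E|\geq 1$ edges, let $d_u$ denote the degree of vertex $u$ and write sums over edges $e_{uv}\in E$ (each edge counted once). The assortativity coefficient of $G$ is $$r(G)=\frac{m^{-1}\sum_{e_{uv}\in E} d_{u}d_{v}-\Big[m^{-1}\sum_{e_{uv}\in E} \tfrac{1}{2}(d_{u}+d_{v})\Big]^{2}}{m^{-1}\sum_{e_{uv}\in E} \tfrac{1}{2}(d^{2}_{u}+d^{2}_{v})-\Big[m^{-1}\sum_{e_{uv}\in E} \tfrac{1}{2}(d_{u}+d_{v})\Big]^{2}},$$ defined whenever the denominator is nonzero. $G$ is called neutral if $r(G)$ is defined and $r(G)=0$. *)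

(* Defs.v *)
From mathcomp Require Import all_boot all_order all_algebra.
Set Implicit Arguments. Unset Strict Implicit. Unset Printing Implicit Defensive.
Import Order.TTheory GRing.Theory Num.Theory.
Local Open Scope ring_scope.

Section Graphs.
Variable n : nat.
Implicit Type e : rel 'I_n.

Definition simple_graph e : Prop := symmetric e /\ irreflexive e.

Definition connected_graph e : Prop := forall u v : 'I_n, connect e u v.

Definition has_cycle e : Prop :=
  exists c : seq 'I_n, [/\ (3 <= size c)%N, uniq c & cycle e c].

Definition is_tree e : Prop := connected_graph e /\ ~ has_cycle e.

Definition deg e (u : 'I_n) : nat := #|[set v | e u v]|.

Definition edge_sum e (F : 'I_n -> 'I_n -> rat) : rat :=
  \sum_(u : 'I_n) \sum_(v : 'I_n | ((u < v)%N && e u v)) F u v.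

Definition nedges e : rat := edge_sum e (fun _ _ => 1).

Definition mean_term e : rat :=
  (nedges e)^-1 * edge_sum e (fun u v => (2%:R)^-1 * ((deg e u)%:R + (deg e v)%:R)).

Definition assort_num e : rat :=
  (nedges e)^-1 * edge_sum e (fun u v => (deg e u)%:R * (deg e v)%:R)
  - (mean_term e) ^+ 2.

Definition assort_den e : rat :=
  (nedges e)^-1 * edge_sum e
     (fun u v => (2%:R)^-1 * ((deg e u)%:R ^+ 2 + (deg e v)%:R ^+ 2))
  - (mean_term e) ^+ 2.

(* assortativity coefficient r(G) (meaningful when assort_den e != 0) *)
Definition assortativity e : rat := assort_num e / assort_den e.

Definition neutral e : Prop :=
  nedges e != 0 /\ assort_den e != 0 /\ assortativity e = 0.

End Graphs.

(* Main.v *)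
Require Import Defs.
From mathcomp Require Import all_boot all_order all_algebra.
From mathcomp Require Import zify ring lra.

Module Aux.
Set Implicit Arguments. Unset Strict Implicit. Unset Printing Implicit Defensive.
Import Order.TTheory GRing.Theory Num.Theory.

Definition G0 (i j : nat) : bool :=
  match i, j with
  | 0, (1|2|3|4|5)%N => true
  | 1, (2|4|5)%N => true
  | 2, (4|5)%N => true
  | _, _ => false
  end.

Definition adj (i j : nat) : bool :=
  if (i < 6) && (j < 6) then G0 i j || G0 j i
  else (i != j) && (i <= j + 2) && (j <= i + 2).

Lemma adj_sym : forall i j, adj i j = adj j i.
Proof.
move=> i j; rewrite /adj andbC orbC; case: ifP => _ //.
by rewrite eq_sym; case: (j == i); case: (i <= j+2); case: (j <= i+2).
Qed.

Lemma adj_irr : forall i, adj i i = false.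
Proof.
move=> i; rewrite /adj eqxx /= andbb.
by case: i => [|[|[|[|[|[|i]]]]]].
Qed.

Lemma adjE i j : (6 <= i) || (6 <= j) -> adj i j = (i != j) && (i <= j + 2) && (j <= i + 2).
Proof. move=> h; rewrite /adj ifF //; apply/negbTE; lia. Qed.

Lemma adj_far i j : 6 <= i -> i + 2 < j -> adj i j = false.
Proof. move=> h1 h2; rewrite adjE; [apply/negbTE; lia | lia]. Qed.

Lemma adj_far' i j : 6 <= i -> j + 2 < i -> adj i j = false.
Proof. move=> h1 h2; rewrite adjE; [apply/negbTE; lia | lia]. Qed.

Lemma adj_near i j : (6 <= i) || (6 <= j) -> i != j -> i <= j + 2 -> j <= i + 2 -> adj i j.
Proof. move=> h1 h2 h3 h4; rewrite adjE //; lia. Qed.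

Lemma adj_low i j : i < 8 -> 10 <= j -> adj i j = false.
Proof. move=> h1 h2; rewrite adjE; [apply/negbTE; lia | lia]. Qed.

Local Open Scope ring_scope.

Lemma sum_window (a b c d : nat) (P : pred nat) (F : nat -> rat) :
  (a <= c)%N -> (c <= d)%N -> (d <= b)%N ->
  (forall i, (a <= i < c)%N -> ~~ P i) -> (forall i, (d <= i < b)%N -> ~~ P i) ->
  \sum_(a <= i < b | P i) F i = \sum_(c <= i < d | P i) F i.
Proof.
move=> h1 h2 h3 hl hr.
rewrite (@big_cat_nat _ _ _ c a b P F h1 (leq_trans h2 h3)) (@big_cat_nat _ _ _ d c b P F h2 h3) /=.
rewrite [X in X + _]big_nat_cond [X in _ + (_ + X)]big_nat_cond.
rewrite [X in X + _]big1; last by move=> i /andP[hi hp]; move: (hl i hi); rewrite hp.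
rewrite [X in _ + (_ + X)]big1; last by move=> i /andP[hi hp]; move: (hr i hi); rewrite hp.
by rewrite add0r addr0.
Qed.

Definition D (n u : nat) : rat := \sum_(0 <= v < n | adj u v) 1.
Definition ES (n : nat) (G : nat -> nat -> rat) : rat :=
  \sum_(0 <= u < n) \sum_(0 <= v < n | (u < v)%N && adj u v) G u v.

Ltac adjt := first [ apply adj_near; lia | rewrite adj_irr // | idtac ].

Lemma D_bulk n u : (8 <= u)%N -> (u.+2 < n)%N -> D n u = 4.
Proof.
move=> h1 h2; rewrite /D (@sum_window _ _ (u - 2) u.+3); try lia.
- do 5! (rewrite big_ltn_cond; last lia).
  rewrite big_geq; last lia.
  have a0 : adj u (u-2) by apply adj_near; lia.
  have a1 : adj u (u-2).+1 by apply adj_near; lia.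
  have a2 : adj u (u-2).+2 = false.
  { have -> : (u-2).+2 = u by lia.
    by rewrite adj_irr. }
  have a3 : adj u (u-2).+3 by apply adj_near; lia.
  have a4 : adj u (u-2).+4 by apply adj_near; lia.
  rewrite /= a0 a1 a2 a3 a4; ring.
- move=> i hi; rewrite adj_far' //; lia.
- move=> i hi; rewrite adj_far //; lia.
Qed.

Lemma D_last2 n u : (8 <= u)%N -> u.+2 = n -> D n u = 3.
Proof.
move=> h1 h2; rewrite /D (@sum_window _ _ (u - 2) n); try lia.
- do 4! (rewrite big_ltn_cond; last lia).
  rewrite big_geq; last lia.
  have a0 : adj u (u-2) by apply adj_near; lia.
  have a1 : adj u (u-2).+1 by apply adj_near; lia.
  have a2 : adj u (u-2).+2 = false.
  { have -> : (u-2).+2 = u by lia.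
    by rewrite adj_irr. }
  have a3 : adj u (u-2).+3 by apply adj_near; lia.
  rewrite /= a0 a1 a2 a3; ring.
- all: move=> i hi; rewrite ?adj_far' //; lia.
Qed.

Lemma D_last n u : (8 <= u)%N -> u.+1 = n -> D n u = 2.
Proof.
move=> h1 h2; rewrite /D (@sum_window _ _ (u - 2) n); try lia.
- do 3! (rewrite big_ltn_cond; last lia).
  rewrite big_geq; last lia.
  have a0 : adj u (u-2) by apply adj_near; lia.
  have a1 : adj u (u-2).+1 by apply adj_near; lia.
  have a2 : adj u (u-2).+2 = false.
  { have -> : (u-2).+2 = u by lia.
    by rewrite adj_irr. }
  rewrite /= a0 a1 a2; ring.
- all: move=> i hi; rewrite ?adj_far' //; lia.
Qed.

Lemma D_low n u : (u < 8)%N -> (10 <= n)%N -> D n u = D 10 u.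
Proof.
move=> h1 h2; rewrite /D (@sum_window _ _ 0 10) //.
move=> i hi; rewrite adj_low //; lia.
Qed.

Lemma D10_0 : D 10 0 = 5.
Proof. rewrite /D; do 10! (rewrite big_ltn_cond //=). by rewrite big_geq. Qed.
Lemma D10_1 : D 10 1 = 4.
Proof. rewrite /D; do 10! (rewrite big_ltn_cond //=). by rewrite big_geq. Qed.
Lemma D10_2 : D 10 2 = 4.
Proof. rewrite /D; do 10! (rewrite big_ltn_cond //=). by rewrite big_geq. Qed.
Lemma D10_3 : D 10 3 = 1.
Proof. rewrite /D; do 10! (rewrite big_ltn_cond //=). by rewrite big_geq. Qed.
Lemma D10_4 : D 10 4 = 4.
Proof. rewrite /D; do 10! (rewrite big_ltn_cond //=). by rewrite big_geq. Qed.
Lemma D10_5 : D 10 5 = 5.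
Proof. rewrite /D; do 10! (rewrite big_ltn_cond //=). by rewrite big_geq. Qed.
Lemma D10_6 : D 10 6 = 4.
Proof. rewrite /D; do 10! (rewrite big_ltn_cond //=). by rewrite big_geq. Qed.
Lemma D10_7 : D 10 7 = 4.
Proof. rewrite /D; do 10! (rewrite big_ltn_cond //=). by rewrite big_geq. Qed.

Definition inner n u G : rat := \sum_(0 <= v < n | (u < v)%N && adj u v) G u v.

Lemma inner_bulk n u G : (6 <= u)%N -> (u.+2 < n)%N -> inner n u G = G u u.+1 + G u u.+2.
Proof.
move=> h1 h2; rewrite /inner (@sum_window _ _ u.+1 u.+3); try lia.
- do 2! (rewrite big_ltn_cond; last lia).
  rewrite big_geq; last lia.
  have a0 : adj u u.+1 by apply adj_near; lia.
  have a1 : adj u u.+2 by apply adj_near; lia.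
  by rewrite /= a0 a1 ltnSn ltnW ?ltnSn //= addr0.
- all: move=> i hi; apply/negP; case/andP=> hu ha; try lia;
  rewrite adj_far in ha; lia.
Qed.

Lemma inner_l2 n u G : (6 <= u)%N -> u.+2 = n -> inner n u G = G u u.+1.
Proof.
move=> h1 h2; rewrite /inner (@sum_window _ _ u.+1 n); try lia.
- do 1! (rewrite big_ltn_cond; last lia).
  rewrite big_geq; last lia.
  have a0 : adj u u.+1 by apply adj_near; lia.
  by rewrite /= a0 ltnSn /= addr0.
- all: move=> i hi; apply/negP; case/andP=> hu ha; lia.
Qed.

Lemma inner_l1 n u G : u.+1 = n -> inner n u G = 0.
Proof.
move=> h2; rewrite /inner big_nat_cond big1 // => i /andP[/andP[_ hi] /andP[hu _]]; lia.
Qed.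

Lemma inner_low n u G : (u < 8)%N -> (10 <= n)%N ->
  inner n u G = \sum_(0 <= v < 10 | (u < v)%N && adj u v) G u v.
Proof.
move=> h1 h2; rewrite /inner (@sum_window _ _ 0 10) //.
move=> i hi; apply/negP; case/andP=> hu ha; rewrite adj_low in ha; lia.
Qed.

Definition lowE (G : nat -> nat -> rat) : rat :=
  G 0%N 1%N + G 0%N 2%N + G 0%N 3%N + G 0%N 4%N + G 0%N 5%N +
  G 1%N 2%N + G 1%N 4%N + G 1%N 5%N + G 2%N 4%N + G 2%N 5%N +
  G 4%N 6%N + G 5%N 6%N + G 5%N 7%N + G 6%N 7%N + G 6%N 8%N + G 7%N 8%N + G 7%N 9%N.

Lemma lowpart G : \sum_(0 <= u < 8) \sum_(0 <= v < 10 | (u < v)%N && adj u v) G u v = lowE G.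
Proof. rewrite unlock /= /lowE; ring. Qed.

Lemma ES_expand n G : (38 <= n)%N -> ES n G = lowE G +
  \sum_(8 <= u < (n - 4)%N) (G u u.+1 + G u u.+2) +
  (G (n-4)%N (n-3)%N + G (n-4)%N (n-2)%N + G (n-3)%N (n-2)%N + G (n-3)%N (n-1)%N + G (n-2)%N (n-1)%N).
Proof.
move=> hn; rewrite /ES.
rewrite (@big_cat_nat _ _ _ 8 0 n) //; last lia.
rewrite (@big_cat_nat _ _ _ (n-4) 8 n) //=; try lia.
rewrite -lowpart -addrA; congr (_ + _).
  apply: eq_big_nat => u hu; rewrite -/(inner n u G) inner_low //; lia.
congr (_ + _).
  apply: eq_big_nat => u hu; rewrite -/(inner n u G) inner_bulk //; lia.
do 4! (rewrite big_ltn; last lia).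
rewrite [\sum_((n - 4).+4 <= i < n) _]big_geq; last lia.
have I0 := @inner_bulk n (n-4) G; rewrite /inner in I0; rewrite I0; try lia.
have I1 := @inner_bulk n (n-4).+1 G; rewrite /inner in I1; rewrite I1; try lia.
have I2 := @inner_l2 n (n-4).+2 G; rewrite /inner in I2; rewrite I2; try lia.
have I3 := @inner_l1 n (n-4).+3 G; rewrite /inner in I3; rewrite I3; try lia.
have e1 : (n-4).+1 = (n-3)%N by lia.
have e2 : (n-3).+1 = (n-2)%N by lia.
have e3 : (n-2).+1 = (n-1)%N by lia.
rewrite e1 e2 e3 !addr0; ring.
Qed.

Definition grel (n : nat) : rel 'I_n := fun i j => adj i j.
Arguments grel : clear implicits.

Lemma deg_D n (u : 'I_n) : (deg (grel n) u)%:R = D n u.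
Proof.
by rewrite /D big_mkord sumr_const /deg cardsE.
Qed.

Lemma edge_ES n (F : 'I_n -> 'I_n -> rat) (G : nat -> nat -> rat) :
  (forall u v : 'I_n, F u v = G u v) -> edge_sum (grel n) F = ES n G.
Proof.
move=> hF; rewrite /edge_sum /ES big_mkord; apply: eq_bigr => u _.
rewrite big_mkord; apply: eq_bigr => v _; exact: hF.
Qed.

Lemma ES_eval n (g : rat -> rat -> rat) : (38 <= n)%N ->
  ES n (fun u v => g (D n u) (D n v)) =
  g 5 4 + g 5 4 + g 5 1 + g 5 4 + g 5 5 + g 4 4 + g 4 4 + g 4 5 + g 4 4 + g 4 5
  + g 4 4 + g 5 4 + g 5 4 + g 4 4 + g 4 4 + g 4 4 + g 4 4
  + (g 4 4 + g 4 4) * (n - 12)%:R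
  + (g 4 4 + g 4 3 + g 4 3 + g 4 2 + g 3 2).
Proof.
move=> hn; rewrite ES_expand // /lowE.
have d0 : D n 0 = 5 by rewrite D_low ?D10_0 //; lia.
have d1 : D n 1 = 4 by rewrite D_low ?D10_1 //; lia.
have d2 : D n 2 = 4 by rewrite D_low ?D10_2 //; lia.
have d3 : D n 3 = 1 by rewrite D_low ?D10_3 //; lia.
have d4 : D n 4 = 4 by rewrite D_low ?D10_4 //; lia.
have d5 : D n 5 = 5 by rewrite D_low ?D10_5 //; lia.
have d6 : D n 6 = 4 by rewrite D_low ?D10_6 //; lia.
have d7 : D n 7 = 4 by rewrite D_low ?D10_7 //; lia.
have d8 : D n 8 = 4 by rewrite D_bulk //; lia.
have d9 : D n 9 = 4 by rewrite D_bulk //; lia.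
have e4 : D n (n-4) = 4 by rewrite D_bulk //; lia.
have e3 : D n (n-3) = 4 by rewrite D_bulk //; lia.
have e2 : D n (n-2) = 3 by rewrite D_last2 //; lia.
have e1 : D n (n-1) = 2 by rewrite D_last //; lia.
rewrite d0 d1 d2 d3 d4 d5 d6 d7 d8 d9 e4 e3 e2 e1.
rewrite (@eq_big_nat _ _ _ 8 (n-4) _ (fun _ => g 4 4 + g 4 4)); last first.
  move=> u hu; rewrite !D_bulk //; lia.
rewrite sumr_const_nat -mulr_natr.
have -> : (n - 4 - 8 = n - 12)%N by lia.
ring.
Qed.

Lemma edge_eval n (F : 'I_n -> 'I_n -> rat) (g : rat -> rat -> rat) : (38 <= n)%N ->
  (forall u v : 'I_n, F u v = g (D n u) (D n v)) ->
  edge_sum (grel n) F =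
  g 5 4 + g 5 4 + g 5 1 + g 5 4 + g 5 5 + g 4 4 + g 4 4 + g 4 5 + g 4 4 + g 4 5
  + g 4 4 + g 5 4 + g 5 4 + g 4 4 + g 4 4 + g 4 4 + g 4 4
  + (g 4 4 + g 4 4) * (n - 12)%:R
  + (g 4 4 + g 4 3 + g 4 3 + g 4 2 + g 3 2).
Proof. move=> hn hF; rewrite (@edge_ES n F (fun u v => g (D n u) (D n v))) //; exact: ES_eval. Qed.

Lemma adj0 j : (0 < j < 6)%N -> adj 0 j.
Proof. by case: j => [|[|[|[|[|[|j]]]]]]. Qed.

Lemma conn0 n (hn : (0 < n)%N) : forall k (u : 'I_n), val u = k -> connect (grel n) (Ordinal hn) u.
Proof.
elim=> [|k IH] u hu.
  by have -> : u = Ordinal hn by apply/val_inj.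
case: (ltnP k.+1 6) => hk.
  apply: connect1; rewrite /grel /= hu; apply: adj0; lia.
have hk' : (k < n)%N.
  { have := ltn_ord u. change (val u) with (nat_of_ord u) in hu. lia. }
apply: (connect_trans (IH (Ordinal hk') erefl)).
apply: connect1; rewrite /grel /= hu; apply: adj_near; lia.
Qed.


Lemma theorem3_aux (n : nat) (hn : (38 <= n)%N) :
  exists e : rel 'I_n,
    [/\ simple_graph e, connected_graph e, neutral e & ~ is_tree e].
Proof.
have sym : symmetric (grel n) by move=> i j; rewrite /grel adj_sym.
have h0 : (0 < n)%N by lia.
have h1 : (1 < n)%N by lia.
have h2 : (2 < n)%N by lia.
exists (grel n); split.
- split => // i; exact: adj_irr.
- move=> u v; apply: (@connect_trans _ _ (Ordinal h0)).
    by rewrite (sym_connect_sym sym); apply: conn0 (erefl _).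
  exact: conn0 (erefl _).
- pose k : rat := (n - 12)%:R.
  have HM : nedges (grel n) = 22 + 2 * k.
    by rewrite /nedges (@edge_eval n _ (fun _ _ => 1) hn) //= /k; ring.
  have HS : edge_sum (grel n) (fun u v => 2%:R^-1 * ((deg (grel n) u)%:R + (deg (grel n) v)%:R))
     = 4 * (22 + 2 * k).
    rewrite (@edge_eval n _ (fun a b : rat => 2%:R^-1 * (a + b)) hn) /=; last by move=> u v; rewrite !deg_D.
    by rewrite /k; field.
  have HP : edge_sum (grel n) (fun u v => (deg (grel n) u)%:R * (deg (grel n) v)%:R)
     = 16 * (22 + 2 * k).
    rewrite (@edge_eval n _ (fun a b : rat => a * b) hn) /=; last by move=> u v; rewrite !deg_D.
    by rewrite /k; field.
  have HQ : edge_sum (grel n) (fun u v => 2%:R^-1 * ((deg (grel n) u)%:R ^+ 2 + (deg (grel n) v)%:R ^+ 2))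
     = 16 * (22 + 2 * k) + 15.
    rewrite (@edge_eval n _ (fun a b : rat => 2%:R^-1 * (a ^+ 2 + b ^+ 2)) hn) /=; last by move=> u v; rewrite !deg_D.
    by rewrite /k; field.
  have k0 : 0 <= k by rewrite /k ler0n.
  have mE : nedges (grel n) = 22 + 2 * k by rewrite HM.
  have m0 : nedges (grel n) != 0 by rewrite mE; apply/eqP; lra.
  have mt : mean_term (grel n) = 4.
    rewrite /mean_term HS mE; field; apply/eqP; lra.
  have den : assort_den (grel n) = 15 / (22 + 2 * k).
    rewrite /assort_den mt HQ mE; field; apply/eqP; lra.
  have num : assort_num (grel n) = 0.
    rewrite /assort_num mt HP mE; field; apply/eqP; lra.
  split; first exact: m0.
  split; last by rewrite /assortativity num mul0r.
  rewrite den; apply/eqP => h.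
  have : 15 / (22 + 2 * k) > 0 :> rat by apply: divr_gt0; lra.
  by rewrite h ltxx.
- case=> _; apply.
  exists [:: Ordinal h0; Ordinal h1; Ordinal h2]; split => //.
Qed.

End Aux.

Theorem theorem3 (n : nat) (hn : (38 <= n)%N) :
  exists e : rel 'I_n,
    [/\ simple_graph e, connected_graph e, neutral e & ~ is_tree e].
Proof. exact: Aux.theorem3_aux hn. Qed.
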